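(* Let $s>1$ and let $M$ be the $s\times s$ integer matrix with $M_{i,i}=M_{i,i+1}=1$ and all other entries $0$. Let $n\in\mathbb N$. For every $y\in\mathbb R^s$ with $y_s=0$ there is a unique $x\in\mathbb R^s$ with $x_1=0$ and $(M^n-\mathrm{Id})x=y$. If moreover for some $k\in\{3,\dots,s\}$ one has $y_i=0$ for all $i\ge s-k+2$, then $x_j=0$ for all $j\ge s-k+3$. Finally, there is a constant $C>0$ depending only on $s$ (not on $n$) such that whenever $\kappa>0$ and $|y_i|\le\kappa/n^{i-1}$ for $1\le i\le s-1$, the solution satisfies $|x_j|\le C\kappa/n^{j-1}$ for $2\le j\le s$.
   Context: Note $M^n_{i,i}=1$ and $M^n_{i,j}=\binom{n}{j-i}$ for $i<j$, $M^n_{i,j}=0$ for $i>j$. *)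

(* Defs.v *)
From HB Require Import structures.
From mathcomp Require Import all_boot all_order all_algebra.
Set Implicit Arguments. Unset Strict Implicit. Unset Printing Implicit Defensive.
Import Order.TTheory GRing.Theory Num.Theory.
Local Open Scope ring_scope.

Definition Mshift (R : pzRingType) (s : nat) : 'M[R]_s :=
  \matrix_(i < s, j < s) (((i : nat) == j) || ((j : nat) == i.+1))%:R.

(* Main.v *)
Require Import Defs.
From HB Require Import structures.
From mathcomp Require Import all_boot all_order all_algebra.
From mathcomp Require Import zify ring lra.
Import Order.TTheory GRing.Theory Num.Theory.
Local Open Scope ring_scope.

Lemma binle n m : ('C(n,m) <= n ^ m)%N.
Proof.
elim: n m => [|n IH] [|m] //.
rewrite binS; apply: leq_trans (leq_add (IH m.+1) (IH m)) _.
rewrite [(n.+1 ^ _)%N]expnS expnS addnC -mulSn leq_mul2l /=.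
by elim: m {IH} => // m IHm; rewrite !expnS leq_mul.
Qed.

Section S.
Variable R : realFieldType.
Variable s : nat.
Local Notation M := (Mshift R s).

Lemma Mpow_entry n (i j : 'I_s) :
  (M ^+ n) i j = if (i <= j)%N then ('C(n, j - i))%:R else 0.
Proof.
elim: n i j => [|n IH] i j.
  rewrite expr0 -idmxE mxE.
  case: leqP => hij.
    rewrite bin0n; congr (_%:R); congr (nat_of_bool _); apply/idP/idP => [/eqP->|h]; first by rewrite subnn.
    by rewrite -val_eqE /= eqn_leq hij -subn_eq0.
  by case: eqP => [E|] //; move: hij; rewrite E ltnn.
rewrite exprSr -mulmxE mxE (bigD1 j) //= IH mxE eqxx /= mulr1.
have Hr : forall k : 'I_s, k != j -> (M ^+ n) i k * M k j
   = (if (i <= k)%N then ('C(n, k - i))%:R else 0) * (j == k.+1 :> nat)%:R.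
  by move=> k hk; rewrite IH mxE val_eqE (negPf hk).
rewrite (eq_bigr _ Hr).
case: j Hr => [[|j'] hj] Hr /=.
  rewrite big1 ?addr0; last by move=> k _; rewrite mulr0.
  by rewrite !sub0n !bin0.
have hj' : (j' < s)%N by apply: ltnW.
rewrite (bigD1 (Ordinal hj')) /=; last by rewrite -val_eqE /= neq_ltn ltnSn.
rewrite eqxx mulr1 big1 ?addr0; last first.
  move=> k /andP [_ hk]; case: eqP => [[E]|]; last by rewrite mulr0.
  by move: hk; rewrite -val_eqE /= E eqxx.
case: (ltngtP i j'.+1) => h.
- have hle : (i <= j')%N by rewrite -ltnS.
  by rewrite hle -natrD subSn // binS.
- by rewrite leqNgt (ltnW h) /= addr0.
- by rewrite h subnn leqNgt ltnSn /= addr0 !bin0.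
Qed.

Lemma Arow n (x : 'cV[R]_s) (i : 'I_s) : ((M ^+ n - 1) *m x) i 0 =
  \sum_(j < s | (i < j)%N) 'C(n, j - i)%:R * x j 0.
Proof.
rewrite mxE [RHS]big_mkcond /=; apply: eq_bigr => j _.
rewrite !mxE Mpow_entry.
case: ltngtP => h.
- by rewrite (_ : (i == j) = false) ?subr0 // -val_eqE /= ltn_eqF.
- by rewrite (_ : (i == j) = false) ?subr0 ?mul0r // -val_eqE /= gtn_eqF.
- by rewrite h subnn bin0 (_ : i == j) ?subrr ?mul0r // -val_eqE /= h.
Qed.


Lemma rowrec n (x : 'cV[R]_s) (i j : 'I_s) (hij : i.+1 = j) :
  ((M ^+ n - 1) *m x) i 0 =
  n%:R * x j 0 + \sum_(k < s | (j < k)%N) 'C(n, k - i)%:R * x k 0.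
Proof.
rewrite Arow (bigD1 j) /=; last by rewrite -hij.
rewrite -hij subSnn bin1; congr (_ + _); apply: eq_bigl => k.
rewrite -val_eqE /= -hij.
by rewrite [(i.+1 < k)%N]ltn_neqAle andbC eq_sym.
Qed.

Lemma down_ind (P : 'I_s -> Prop) :
  (forall j : 'I_s, (forall k : 'I_s, (j < k)%N -> P k) -> P j) -> forall j, P j.
Proof.
move=> H.
suff K : forall d (j : 'I_s), (s - d <= j)%N -> P j.
  by move=> j; apply: (K s); rewrite subnn.
elim=> [|d IH] j hj.
  by move: hj; rewrite subn0 leqNgt ltn_ord.
apply: H => k hk; apply: IH; lia.
Qed.

Lemma hom n (hn : (0 < n)%N) (x : 'cV[R]_s) :
  (forall j : 'I_s, j.+1 = 1%N -> x j 0 = 0) -> (M ^+ n - 1) *m x = 0 -> x = 0.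
Proof.
move=> h0 hA; apply/matrixP => j l; rewrite (ord1 l) [RHS]mxE.
move: j; apply: down_ind => j IH.
case E: (val j) => [|j']; first by apply: h0; rewrite E.
have hi : (j' < s)%N by rewrite (ltn_trans _ (ltn_ord j)) // E.
have := rowrec n x (Ordinal hi) j (esym E).
rewrite hA mxE big1 ?addr0; last by move=> k hk; rewrite IH // mulr0.
move/esym/eqP; rewrite mulf_eq0 pnatr_eq0 eqn0Ngt hn /=.
by move/eqP.
Qed.

Lemma step n (hn : (0 < n)%N) (x : 'cV[R]_s) (i j : 'I_s) (hij : i.+1 = j) :
  (forall k : 'I_s, (j < k)%N -> x k 0 = 0) ->
  ((M ^+ n - 1) *m x) i 0 = 0 -> x j 0 = 0.
Proof.
move=> IH; rewrite (rowrec n x i j hij) big1 ?addr0; last by move=> k hk; rewrite IH // mulr0.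
by move/eqP; rewrite mulf_eq0 pnatr_eq0 eqn0Ngt hn /= => /eqP.
Qed.

Lemma cnt_sum (c : R) m j : \sum_(k < m | (j < k)%N) c = c *+ (m - j.+1).
Proof.
elim: m => [|m IH]; first by rewrite big_ord0.
rewrite big_mkcond big_ord_recr /= -big_mkcond /= IH.
case: ltnP => h.
  by rewrite -mulrSr; congr (_ *+ _); lia.
by rewrite addr0; congr (_ *+ _); lia.
Qed.

Hypothesis hs : (0 < s)%N.

Definition lst : 'I_s := Ordinal (n:=s) (m:=s.-1) (eq_ind_r is_true hs (ltn_predL s)).
Definition fst : 'I_s := Ordinal hs.

Definition Bm n : 'M[R]_s :=
  \matrix_(k, l) ((M ^+ n - 1) k l + ((k == lst) && (l == fst))%:R).

Lemma Bmul n (x : 'cV[R]_s) k :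
  (Bm n *m x) k 0 = ((M ^+ n - 1) *m x) k 0 + (k == lst)%:R * x fst 0.
Proof.
rewrite [LHS]mxE (eq_bigr (fun l => (M ^+ n - 1) k l * x l 0 +
   ((k == lst) && (l == fst))%:R * x l 0)); last by move=> l _; rewrite mxE mulrDl.
rewrite big_split /=.
have -> : \sum_(l < s) ((k == lst) && (l == fst))%:R * x l 0 = (k == lst)%:R * x fst 0.
  rewrite (bigD1 fst) //= eqxx andbT big1 ?addr0 // => l hl.
  by rewrite (negPf hl) andbF mul0r.
by rewrite [in RHS]mxE.
Qed.

Lemma Alast n (x : 'cV[R]_s) : ((M ^+ n - 1) *m x) lst 0 = 0.
Proof.
rewrite Arow big1 // => j hj; have := ltn_ord j; move: hj; rewrite /= ; lia.
Qed.

Lemma exist_sol n (hn : (0 < n)%N) (y : 'cV[R]_s) :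
  y lst 0 = 0 -> exists x : 'cV[R]_s, x fst 0 = 0 /\ (M ^+ n - 1) *m x = y.
Proof.
move=> hy.
have inj : forall x : 'cV[R]_s, Bm n *m x = 0 -> x = 0.
  move=> x hx.
  have h0 : x fst 0 = 0.
    by have := Bmul n x lst; rewrite hx Alast eqxx mul1r add0r mxE.
  apply: (hom n hn) => [j hj|].
    by rewrite (_ : j = fst) //; apply: val_inj => /=; lia.
  apply/matrixP => k l; rewrite (ord1 l).
  by have := Bmul n x k; rewrite hx h0 mulr0 addr0 !mxE.
have U : Bm n \in unitmx.
  rewrite unitmxE unitfE; apply/negP => /eqP hd.
  have /det0P [v vn0 hv] : \det (Bm n)^T == 0 by rewrite det_tr hd.
  suff : v^T = 0 by move/(congr1 trmx); rewrite trmxK trmx0 => E; rewrite E eqxx in vn0.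
  apply: inj; apply: trmx_inj; by rewrite trmx_mul trmxK hv trmx0.
exists (invmx (Bm n) *m y).
have hB := mulKVmx U y.
have h0 : (invmx (Bm n) *m y) fst 0 = 0.
  by have := Bmul n (invmx (Bm n) *m y) lst; rewrite hB Alast eqxx mul1r add0r hy.
split => //; apply/matrixP => k l; rewrite (ord1 l).
by have := Bmul n (invmx (Bm n) *m y) k; rewrite hB h0 mulr0 addr0.
Qed.


Lemma natineq j' : (j'.+1 < s)%N ->
  (1 + (s - j'.+2) * s.+1 ^ (s.-1 - j'.+2) <= s.+1 ^ (s.-1 - j'.+1))%N.
Proof.
move=> hj.
case Em: (s - j'.+2)%N => [|m']; first by rewrite mul0n addn0 expn_gt0.
have -> : (s.-1 - j'.+1 = m'.+1)%N by lia.
have -> : (s.-1 - j'.+2 = m')%N by lia.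
have hp := expn_gt0 s.+1 m'; rewrite /= in hp.
rewrite expnS; have hm : (m'.+1 <= s)%N by lia.
nia.
Qed.

Lemma bound n (hn : (0 < n)%N) (kappa : R) (hkap : 0 < kappa) (x y : 'cV[R]_s) :
  (M ^+ n - 1) *m x = y ->
  (forall i : 'I_s, (i.+1 < s)%N -> `|y i 0| <= kappa / n%:R ^+ i) ->
  forall j : 'I_s, (0 < j)%N ->
    `|x j 0| <= (s.+1 ^ (s.-1 - j))%:R * kappa / n%:R ^+ j.
Proof.
move=> hA hy; apply: down_ind => j IH hj.
case E: (val j) hj => [|j'] // _.
have hi : (j' < s)%N by rewrite (ltn_trans _ (ltn_ord j)) // E.
have hr := rowrec n x (Ordinal hi) j (esym E); rewrite hA /= in hr.
have Npos : 0 < (n%:R : R) by rewrite ltr0n.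
have hS : `|\sum_(k < s | (j < k)%N) 'C(n, k - j')%:R * x k 0|
    <= (s.+1 ^ (s.-1 - j'.+2))%:R * kappa / n%:R ^+ j' *+ (s - j'.+2).
  rewrite -E -cnt_sum; apply: le_trans (ler_norm_sum _ _ _) _.
  apply: ler_sum => k hk.
  have hk0 : (0 < k)%N by apply: leq_ltn_trans hk.
  have hxk := IH k hk hk0.
  have hjk : (j' <= k)%N by rewrite E in hk; lia.
  rewrite normrM ger0_norm ?ler0n //.
  apply: (@le_trans _ _ (n%:R ^+ (k - j') * ((s.+1 ^ (s.-1 - k))%:R * kappa / n%:R ^+ k))).
    by apply: ler_pM => //; rewrite -natrX ler_nat binle.
  have nz1 : n%:R ^+ (k - j') != 0 :> R by rewrite expf_neq0 // gt_eqF.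
  have nz2 : n%:R ^+ j' != 0 :> R by rewrite expf_neq0 // gt_eqF.
  have -> : n%:R ^+ (k - j') * ((s.+1 ^ (s.-1 - k))%:R * kappa / n%:R ^+ k)
     = (s.+1 ^ (s.-1 - k))%:R * kappa / n%:R ^+ j' :> R.
    rewrite -(subnK hjk) exprD addnK; field.
    by rewrite nz1 nz2.
  rewrite ler_wpM2r //; first by rewrite invr_ge0 exprn_ge0 // ltW.
  rewrite ler_wpM2r //; first by rewrite ltW.
  rewrite ler_nat leq_exp2l //; rewrite E in hk; lia.
have hj1 : (j'.+1 < s)%N by rewrite -E ltn_ord.
have hyi := hy (Ordinal hi) hj1.
move: hr hS; set S := \sum_(k < s | _) _ => hr hS.
have Nnz : (n%:R : R) != 0 by rewrite gt_eqF.
have Njnz : (n%:R ^+ j' : R) != 0 by rewrite expf_neq0.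
have hx : x j 0 = (y (Ordinal hi) 0 - S) / n%:R by rewrite hr; field.
rewrite hx normrM normfV (gtr0_norm Npos).
apply: (@le_trans _ _ ((kappa / n%:R ^+ j' +
   (s.+1 ^ (s.-1 - j'.+2))%:R * kappa / n%:R ^+ j' *+ (s - j'.+2)) / n%:R)).
  apply: ler_wpM2r; first by rewrite invr_ge0 ltW.
  by apply: le_trans (ler_normB _ _) _; apply: lerD.
have -> : (kappa / n%:R ^+ j' +
   (s.+1 ^ (s.-1 - j'.+2))%:R * kappa / n%:R ^+ j' *+ (s - j'.+2)) / n%:R
   = (1 + (s - j'.+2) * s.+1 ^ (s.-1 - j'.+2))%:R * kappa / n%:R ^+ j'.+1.
  rewrite -mulr_natr natrD natrM exprSr; field.
  by rewrite mul1r Nnz Njnz.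
apply: ler_wpM2r; first by rewrite invr_ge0 exprn_ge0 // ler0n.
apply: ler_wpM2r; first by rewrite ltW.
by rewrite ler_nat natineq.
Qed.


End S.

Theorem mainTheorem13 (R : realFieldType) (s : nat) (hs : (1 < s)%N) :
  (* existence and uniqueness *)
  (forall (n : nat), (0 < n)%N ->
    forall y : 'cV[R]_s, (forall i : 'I_s, i.+1 = s -> y i 0 = 0) ->
    exists x : 'cV[R]_s,
      ((forall j : 'I_s, j.+1 = 1%N -> x j 0 = 0) /\
       (Mshift R s ^+ n - 1) *m x = y) /\
      (forall x' : 'cV[R]_s,
         (forall j : 'I_s, j.+1 = 1%N -> x' j 0 = 0) /\
         (Mshift R s ^+ n - 1) *m x' = y -> x' = x))
  /\
  (* vanishing of trailing coordinates *)
  (forall (n : nat), (0 < n)%N ->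
    forall (k : nat), (3 <= k <= s)%N ->
    forall y x : 'cV[R]_s,
      (forall i : 'I_s, i.+1 = s -> y i 0 = 0) ->
      (forall i : 'I_s, (s - k + 2 <= i.+1)%N -> y i 0 = 0) ->
      (forall j : 'I_s, j.+1 = 1%N -> x j 0 = 0) ->
      (Mshift R s ^+ n - 1) *m x = y ->
      forall j : 'I_s, (s - k + 3 <= j.+1)%N -> x j 0 = 0)
  /\
  (* uniform bounds, C depending only on s *)
  (exists C : R, 0 < C /\
    forall (n : nat), (0 < n)%N ->
    forall (kappa : R), 0 < kappa ->
    forall y x : 'cV[R]_s,
      (forall i : 'I_s, i.+1 = s -> y i 0 = 0) ->
      (forall i : 'I_s, (1 <= i.+1 <= s - 1)%N ->
         `|y i 0| <= kappa / (n%:R ^+ (i.+1 - 1))) ->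
      (forall j : 'I_s, j.+1 = 1%N -> x j 0 = 0) ->
      (Mshift R s ^+ n - 1) *m x = y ->
      forall j : 'I_s, (2 <= j.+1 <= s)%N ->
        `|x j 0| <= C * kappa / (n%:R ^+ (j.+1 - 1))).
Proof.
have hs0 : (0 < s)%N by apply: ltnW.
split; [|split].
- move=> n hn y hy.
  have [x [hx0 hx]] := @exist_sol R s hs0 n hn y (hy (lst s hs0) (prednK hs0)).
  exists x; split.
    split=> // j hj; rewrite (_ : j = fst s hs0 :> 'I_s) //; apply: val_inj => /=; lia.
  move=> x' [hx'0 hx']; apply/eqP; rewrite -subr_eq0; apply/eqP.
  apply: (@hom R s n hn) => [j hj|].
    by rewrite !mxE hx'0 // (_ : j = fst s hs0 :> 'I_s) ?hx0 ?subr0 //; apply: val_inj => /=; lia.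
  by rewrite mulmxBr hx hx' subrr.
- move=> n hn k hk y x hys hy hx0 hA.
  apply: down_ind => j IH hj.
  case E: (val j) hj => [|j'] hj; first by lia.
  have hi : (j' < s)%N by rewrite (ltn_trans _ (ltn_ord j)) // E.
  apply: (@step R s n hn x (Ordinal hi) j) => [|k' hk'|]; first by rewrite E.
    apply: IH => //; have : (j'.+1 < k')%N by rewrite -E. lia.
  by rewrite hA; apply: hy => /=; lia.
- exists ((s.+1 ^ s)%:R); split; first by rewrite ltr0n expn_gt0.
  move=> n hn kappa hkap y x hys hy hx0 hA j hj.
  have hj0 : (0 < j)%N by lia.
  have hy' : forall i : 'I_s, (i.+1 < s)%N -> `|y i 0| <= kappa / n%:R ^+ i.
    by move=> i hi; have := hy i; rewrite !subn1 /=; apply; lia.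
  have H := @bound R s hs0 n hn kappa hkap x y hA hy' j hj0.
  rewrite subn1 /=; apply: le_trans H _.
  apply: ler_wpM2r; first by rewrite invr_ge0 exprn_ge0 // ler0n.
  apply: ler_wpM2r; first by rewrite ltW.
  rewrite ler_nat leq_exp2l //; lia.
Qed.
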